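(* Let $(X,\|\cdot\|)$ be a Banach space. If every ordered pair $(A,B)$ of nonempty subsets of $X$ with $A$ convex has the $UC$ property, then $(X,\|\cdot\|)$ is a uniformly convex Banach space.
   Context: $\mathrm{dist}(A,B)=\inf\{\|a-b\|:a\in A,b\in B\}$. The ordered pair $(A,B)$ has the $UC$ property if for all sequences $\{x_n\},\{z_n\}\subset A$, $\{y_n\}\subset B$ with $\lim_n\|x_n-y_n\|=\lim_n\|z_n-y_n\|=\mathrm{dist}(A,B)$ one has $\lim_n\|x_n-z_n\|=0$. $X$ is uniformly convex if for every $\varepsilon\in(0,2]$, $\inf\{1-\|\frac{x+y}{2}\|: \|x\|,\|y\|\le1,\ \|x-y\|\ge\varepsilon\}>0$. *)

(* Defs.v *)
From HB Require Import structures.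
From mathcomp Require Import all_boot all_order all_algebra.
From mathcomp Require Import all_classical all_reals all_analysis.
Set Implicit Arguments. Unset Strict Implicit. Unset Printing Implicit Defensive.
Import Order.TTheory GRing.Theory Num.Theory.
Import numFieldNormedType.Exports.
Local Open Scope classical_set_scope.
Local Open Scope ring_scope.

Definition set_dist {R : realType} {X : normedModType R} (A B : set X) : R :=
  inf [set `|a - b| | a in A & b in B].

Definition UC_property {R : realType} {X : normedModType R} (A B : set X) :=
  forall (x z y : nat -> X),
    (forall n, A (x n)) -> (forall n, A (z n)) -> (forall n, B (y n)) ->
    (fun n => `|x n - y n|) @ \oo --> set_dist A B ->
    (fun n => `|z n - y n|) @ \oo --> set_dist A B ->
    (fun n => `|x n - z n|) @ \oo --> (0 : R).

(* Uniform convexity: for every eps in (0,2],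
   inf { 1 - ||(x+y)/2|| : ||x||,||y|| <= 1, ||x-y|| >= eps } > 0,
   the infimum taken in the extended reals (inf of the empty set = +oo). *)
Definition uniformly_convex {R : realType} (X : normedModType R) :=
  forall eps : R, 0 < eps -> eps <= 2 ->
    (0 < ereal_inf [set (1 - `|(2^-1 : R) *: (p.1 + p.2)|)%:E
                   | p in [set p : X * X | [/\ (`|p.1| <= 1)%R, (`|p.2| <= 1)%R
                                             & (eps <= `|p.1 - p.2|)%R]]])%E.

(* Main.v *)
Require Import Defs.
From HB Require Import structures.
From mathcomp Require Import all_boot all_order all_algebra.
From mathcomp Require Import all_classical all_reals all_analysis.
From mathcomp Require Import ring lra.
Import Order.TTheory GRing.Theory Num.Theory.
Import numFieldNormedType.Exports.
Local Open Scope classical_set_scope.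
Local Open Scope ring_scope.

Theorem corollary45 (R : realType) (X : completeNormedModType R) :
  (forall A B : set X, A !=set0 -> B !=set0 -> @convex_set R X A ->
     UC_property A B) ->
  uniformly_convex X.
Proof.
move=> HUC eps eps0 eps2.
rewrite ltNge; apply/negP => Hle.
have Hpick : forall n : nat, exists p : X * X,
    [/\ `|p.1| <= 1, `|p.2| <= 1, eps <= `|p.1 - p.2|
      & 1 - `|(2^-1 : R) *: (p.1 + p.2)| < harmonic n].
  move=> n.
  have : (ereal_inf [set (1 - `|(2^-1 : R) *: (p.1 + p.2)|)%:E
                   | p in [set p : X * X | [/\ (`|p.1| <= 1)%R, (`|p.2| <= 1)%R
                                             & (eps <= `|p.1 - p.2|)%R]]]
           < (harmonic n)%:E)%E.
    by apply: (le_lt_trans Hle); rewrite lte_fin harmonic_gt0.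
  case/ereal_inf_lt => _ [p [h1 h2 h3] <-]; rewrite lte_fin => h4.
  by exists p; split.
have /choice [p Hp] := Hpick.
pose x n := (p n).1. pose y n := (p n).2.
pose m n := (2^-1 : R) *: (x n + y n).
have Hx : forall n, `|x n| <= 1 by move=> n; case: (Hp n).
have Hy : forall n, `|y n| <= 1 by move=> n; case: (Hp n).
have Hxy : forall n, eps <= `|x n - y n| by move=> n; case: (Hp n).
have Hm : forall n, 1 - `|m n| < harmonic n by move=> n; case: (Hp n).
have Hm1 : forall n, `|m n| <= 1.
  move=> n; rewrite /m normrZ ger0_norm ?invr_ge0 // .
  rewrite ler_pdivrMl // mulr1; apply: (le_trans (ler_normD _ _)).
  by rewrite -[2]/(1 + 1); apply: lerD.
have Hm0 : forall n, 0 <= 1 - `|m n| by move=> n; rewrite subr_ge0.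
pose e := x 0%N - y 0%N.
have e0 : 0 < `|e| by apply: lt_le_trans eps0 (Hxy 0%N).
pose v n := if m n == 0 then e else m n.
have v0 : forall n, 0 < `|v n|.
  by move=> n; rewrite /v; case: eqP => // /eqP; rewrite normr_gt0.
pose b n := (2 / `|v n|) *: v n.
have Hb : forall n, `|b n| = 2.
  move=> n; rewrite /b normrZ ger0_norm; last by rewrite divr_ge0 // ltW.
  by rewrite -mulrA mulVf ?mulr1 // gt_eqF.
have Hbnd : forall z n, `|z| <= 1 -> `|z - 2 *: m n| <= 1 ->
    1 <= `|z - b n| <= 1 + 2 * (1 - `|m n|).
  move=> z n hz hz'; apply/andP; split.
    apply: le_trans (_ : `|b n| - `|z| <= _); first by rewrite Hb; lra.
    by rewrite distrC; exact: lerB_dist.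
  apply: le_trans (ler_distD (2 *: m n) _ _) _.
  rewrite /b /v; case: eqP => [->|/eqP mn0].
    rewrite scaler0 sub0r normrN normr0 subr0.
    have He : `|(2 / `|e|) *: e| = 2.
      rewrite normrZ ger0_norm; last by rewrite divr_ge0 // ltW.
      by rewrite -mulrA mulVf ?mulr1 // gt_eqF.
    rewrite He; lra.
  rewrite -scalerBl normrZ.
  have t0 : 0 < `|m n| by rewrite normr_gt0.
  have -> : 2 - 2 / `|m n| = (2 * `|m n| - 2) / `|m n|.
    by field; rewrite gt_eqF.
  rewrite normrM normfV (gtr0_norm t0) mulfVK ?gt_eqF //.
  rewrite ler0_norm; last by rewrite subr_le0 -[leRHS]mulr1 ler_pM2l.
  have := Hm1 n; lra.
pose A := [set a : X | `|a| <= 1].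
pose B := [set c : X | 2 <= `|c|].
have Hd : set_dist A B = 1.
  rewrite /set_dist; apply/eqP; rewrite eq_le; apply/andP; split.
    have : [set `|a - b| | a in A & b in B] 1.
      exists ((1 / `|e|) *: e); last exists ((2 / `|e|) *: e).
      - rewrite /A /= normrZ ger0_norm; last by rewrite divr_ge0 // ltW.
        by rewrite -mulrA mulVf ?mulr1 // gt_eqF.
      - rewrite /B /= normrZ ger0_norm; last by rewrite divr_ge0 // ltW.
        by rewrite -mulrA mulVf ?mulr1 // gt_eqF.
      rewrite -scalerBl normrZ -mulrBl.
      have -> : 1 - 2 = - 1 :> R by lra.
      by rewrite mulN1r normrN normfV normr_id mulVf // gt_eqF.
    move=> H1; apply: (ge_inf _ H1).
    exists 0 => _ [a _ [c _ <-]]; exact: normr_ge0.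
  apply: lb_le_inf.
    exists `|0 - (2 / `|e|) *: e|; exists 0; first by rewrite /A /= normr0.
    exists ((2 / `|e|) *: e) => //.
    rewrite /B /= normrZ ger0_norm; last by rewrite divr_ge0 // ltW.
    by rewrite -mulrA mulVf ?mulr1 // gt_eqF.
  move=> _ [a Aa [c Bc <-]].
  apply: le_trans (_ : `|c| - `|a| <= _).
    by move: Aa Bc; rewrite /A /B /=; lra.
  by rewrite distrC; exact: lerB_dist.
have H2m : forall n, 2 *: m n = x n + y n.
  by move=> n; rewrite /m scalerA mulfV ?scale1r // pnatr_eq0.
have Hcv0 : (fun n => 1 - `|m n|) @ \oo --> (0 : R).
  apply: (@squeeze_cvgr _ _ _ _ (fun=> 0) harmonic).
  - by apply: nearW => n; rewrite Hm0 ltW.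
  - exact: cvg_cst.
  - exact: cvg_harmonic.
have Hcv1 : (fun n => 1 + 2 * (1 - `|m n|)) @ \oo --> (1 : R).
  rewrite -[X in _ --> X]addr0; apply: cvgD; first exact: cvg_cst.
  rewrite -(mulr0 2); apply: cvgM; first exact: cvg_cst.
  exact: Hcv0.
have Hxb : (fun n => `|x n - b n|) @ \oo --> set_dist A B.
  rewrite Hd; apply: (@squeeze_cvgr _ _ _ _ (fun=> 1) (fun n => 1 + 2 * (1 - `|m n|))).
  - apply: nearW => n; apply: Hbnd => //.
    by rewrite H2m opprD addrA subrr sub0r normrN.
  - exact: cvg_cst.
  - exact: Hcv1.
have Hyb : (fun n => `|y n - b n|) @ \oo --> set_dist A B.
  rewrite Hd; apply: (@squeeze_cvgr _ _ _ _ (fun=> 1) (fun n => 1 + 2 * (1 - `|m n|))).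
  - apply: nearW => n; apply: Hbnd => //.
    by rewrite H2m opprD addrA [y n + _]addrC addrK normrN.
  - exact: cvg_cst.
  - exact: Hcv1.
have convA : @convex_set R X A.
  move=> a c l; rewrite !inE /A /= => ha hc.
  rewrite /conv /=.
  have l0 : 0 <= l%:num by apply: ge0.
  have l1 : l%:num <= 1 by apply: le1.
  apply: le_trans (ler_normD _ _) _; rewrite !normrZ /unstable.onem.
  rewrite (ger0_norm l0) (@ger0_norm _ (1 - l%:num)); last by rewrite subr_ge0.
  nra.
have HA : A !=set0 by exists 0; rewrite /A /= normr0.
have HB : B !=set0 by exists (b 0%N); rewrite /B /= Hb.
have Bb : forall n, B (b n) by move=> n; rewrite /B /= Hb.
have := HUC A B HA HB convA x y b Hx Hy Bb Hxb Hyb.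
move/cvgrPdist_lt/(_ eps eps0).
case => N _ HN; have := HN N (leqnn N).
rewrite sub0r normrN normr_id; have := Hxy N; lra.
Qed.
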